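(* There exists a discrete probability distribution $F$ on $(0,1]$ with $F$-almost surely every sample $X$ satisfying $X\ge 1/4$, such that, with $I_n(F)=(X_1,\ldots,X_n)$ a list of $n$ i.i.d. samples from $F$, $$\liminf_{n\to\infty}\frac{\mathbb{E}[\mathrm{BF}(I_n(F))]}{\mathbb{E}[\mathrm{OPT}(I_n(F))]} > \frac{11}{10}.$$
   Context: Bin packing: items with sizes in $(0,1]$ are packed into unit-capacity bins (total size per bin at most $1$); $\mathrm{OPT}(I)$ is the minimum number of bins for list $I$. The online algorithm Best Fit (BF) processes the items in the given order and packs the current item into the fullest bin (largest current load) into which it fits, opening a new bin if it fits into no existing bin; items are never moved. $\mathrm{BF}(I)$ denotes the number of bins Best Fit uses on list $I$. *)

(* Defs.v *)
From Stdlib Require Import Reals Lra Lia List ClassicalEpsilon.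
From Coquelicot Require Import Coquelicot.
Import ListNotations.
Open Scope R_scope.

Fixpoint bf_best (x : R) (bins : list R) : option R :=
  match bins with
  | nil => None
  | b :: bs =>
      let r := bf_best x bs in
      if Rle_dec (b + x) 1 then
        match r with
        | None => Some b
        | Some c => if Rle_dec c b then Some b else Some c
        end
      else r
  end.

Fixpoint replace_first (b y : R) (bins : list R) : list R :=
  match bins with
  | nil => nil
  | c :: cs => if Req_EM_T c b then y :: cs else c :: replace_first b y cs
  end.

Definition bf_step (bins : list R) (x : R) : list R :=
  match bf_best x bins with
  | None => bins ++ [x]
  | Some b => replace_first b (b + x) bins
  end.

Definition BF (I : list R) : nat := length (fold_left bf_step I nil).

Definition Rlist_sum (l : list R) : R := fold_right Rplus 0 l.

Definition packable (I : list R) (k : nat) : Prop :=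
  exists f : nat -> nat,
    (forall i, (i < length I)%nat -> (f i < k)%nat) /\
    (forall j, (j < k)%nat ->
       Rlist_sum (map (fun i => if Nat.eq_dec (f i) j then nth i I 0 else 0)
                      (seq 0 (length I))) <= 1).

Definition decP (P : Prop) : bool :=
  if excluded_middle_informative P then true else false.

Fixpoint first_packable (I : list R) (k fuel : nat) : nat :=
  match fuel with
  | O => k
  | S fuel' => if decP (packable I k) then k else first_packable I (S k) fuel'
  end.

(* OPT(I): least k such that I is packable into k bins (for items in (0,1]
   this is at most length I, which is returned as fallback). *)
Definition OPT (I : list R) : nat := first_packable I 0 (length I).

(* A discrete distribution is given by atoms s i with probabilities p i.
   Eiid s p n g = E[ g (X_1, ..., X_n) ] for X_1..X_n i.i.d. ~ F. *)
Fixpoint Eiid (s p : nat -> R) (n : nat) (g : list R -> R) : R :=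
  match n with
  | O => g nil
  | S m => Series (fun i => p i * Eiid s p m (fun l => g (s i :: l)))
  end.

(* Main.v *)
Require Import Defs.
From Stdlib Require Import Reals.
From Coquelicot Require Import Coquelicot.
From Stdlib Require Import Lra Lia List FunctionalExtensionality ClassicalEpsilon.
Import ListNotations.
Open Scope R_scope.

Lemma series_two (a : nat -> R) : (forall i, (2 <= i)%nat -> a i = 0) ->
  is_series a (a 0%nat + a 1%nat).
Proof.
  intros H. apply filterlim_ext_loc with (f := fun _ => a 0%nat + a 1%nat).
  - exists 1%nat. intros n Hn. induction n as [|n IH]; [lia|].
    destruct n as [|n].
    + rewrite sum_Sn, sum_O. reflexivity.
    + rewrite sum_Sn, <- IH by lia. rewrite (H (S (S n))) by lia.
      change (plus (a 0%nat + a 1%nat) 0) with (a 0%nat + a 1%nat + 0); ring.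
  - apply filterlim_const.
Qed.

Definition sv (i : nat) : R := match i with 1%nat => 1/3 | _ => 1/4 end.
Definition pv (i : nat) : R := match i with 0%nat => 3/5 | 1%nat => 2/5 | _ => 0 end.

Fixpoint E2 (n : nat) (g : list R -> R) : R :=
  match n with
  | O => g nil
  | S m => 3/5 * E2 m (fun l => g (1/4 :: l)) + 2/5 * E2 m (fun l => g (1/3 :: l))
  end.

Lemma Eiid_E2 n : forall g, Eiid sv pv n g = E2 n g.
Proof.
  induction n as [|m IH]; intros g; simpl; [reflexivity|].
  erewrite is_series_unique.
  2:{ apply series_two. intros i Hi. destruct i as [|[|i]]; [lia|lia|]. simpl. ring. }
  simpl. rewrite !IH. reflexivity.
Qed.

Definition Supp (x : R) := x = 1/4 \/ x = 1/3.

Lemma E2_mono n : forall g1 g2, (forall l, length l = n -> List.Forall Supp l -> g1 l <= g2 l) ->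
  E2 n g1 <= E2 n g2.
Proof.
  induction n as [|m IH]; intros g1 g2 H; simpl.
  - apply H; auto.
  - assert (E2 m (fun l => g1 (1/4 :: l)) <= E2 m (fun l => g2 (1/4 :: l))).
    { apply IH. intros l Hl Hf. apply H. simpl; lia. constructor; auto. left; auto. }
    assert (E2 m (fun l => g1 (1/3 :: l)) <= E2 m (fun l => g2 (1/3 :: l))).
    { apply IH. intros l Hl Hf. apply H. simpl; lia. constructor; auto. right; auto. }
    lra.
Qed.

Definition w (x : R) : R := if Req_EM_T x (1/4) then 1/4 else 1/3.
Definition W (l : list R) : R := fold_right (fun x acc => w x + acc) 0 l.

Lemma E2_W n : forall a, E2 n (fun l => a + W l) = a + INR n * (17/60).
Proof.
  induction n as [|m IH]; intros a; simpl.
  - unfold W; simpl; ring.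
  - unfold W at 1 2; simpl.
    replace (fun l => a + (w (1/4) + fold_right (fun x acc => w x + acc) 0 l)) with
      (fun l => (a + w (1/4)) + W l) by (apply functional_extensionality; intros; unfold W; ring).
    replace (fun l => a + (w (1/3) + fold_right (fun x acc => w x + acc) 0 l)) with
      (fun l => (a + w (1/3)) + W l) by (apply functional_extensionality; intros; unfold W; ring).
    rewrite !IH. unfold w.
    destruct (Req_EM_T (1/4) (1/4)); [|lra].
    destruct (Req_EM_T (1/3) (1/4)); [lra|].
    destruct m; [simpl; lra|]. lra.
Qed.

Fixpoint cnt (v : R) (l : list R) : nat :=
  match l with nil => 0%nat | c :: cs => ((if Req_EM_T c v then 1 else 0) + cnt v cs)%nat end.

Lemma cnt_In v l : In v l -> (0 < cnt v l)%nat.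
Proof.
  induction l as [|c l IH]; simpl; [tauto|]. intros [E|H].
  - subst. destruct (Req_EM_T v v); [lia|congruence].
  - specialize (IH H). lia.
Qed.

Lemma In_cnt v l : (0 < cnt v l)%nat -> In v l.
Proof.
  induction l as [|c l IH]; simpl; [lia|]. destruct (Req_EM_T c v); intros H.
  - left; auto.
  - right; apply IH; lia.
Qed.

Lemma cnt_app v l x : cnt v (l ++ [x]) = (cnt v l + if Req_EM_T x v then 1 else 0)%nat.
Proof. induction l as [|c l IH]; simpl; [lia|]. rewrite IH. lia. Qed.

Lemma cnt_replace b y v l : In b l ->
  (cnt v (replace_first b y l) + (if Req_EM_T b v then 1 else 0) =
   cnt v l + (if Req_EM_T y v then 1 else 0))%nat.
Proof.
  induction l as [|c l IH]; simpl; [tauto|]. intros Hin.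
  destruct (Req_EM_T c b) as [E|E].
  - subst c. simpl. lia.
  - destruct Hin as [Hc|Hin]; [congruence|]. simpl. specialize (IH Hin). lia.
Qed.

Lemma length_replace b y l : length (replace_first b y l) = length l.
Proof. induction l as [|c l IH]; simpl; auto. destruct (Req_EM_T c b); simpl; auto. Qed.

Lemma Forall_replace (P : R -> Prop) b y l : List.Forall P l -> P y -> List.Forall P (replace_first b y l).
Proof.
  induction l as [|c l IH]; simpl; auto. intros H Hy. inversion H; subst.
  destruct (Req_EM_T c b); constructor; auto.
Qed.

Lemma bb_none x bins : bf_best x bins = None -> forall c, In c bins -> 1 < c + x.
Proof.
  induction bins as [|b bs IH]; simpl; [tauto|].
  destruct (Rle_dec (b + x) 1) as [Hf|Hf].
  - destruct (bf_best x bs); [destruct (Rle_dec r b)|]; discriminate.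
  - intros H c [E|Hc]; [subst; lra|]. apply IH; auto.
Qed.

Lemma bb_some x bins b : bf_best x bins = Some b ->
  In b bins /\ b + x <= 1 /\ forall c, In c bins -> c + x <= 1 -> c <= b.
Proof.
  revert b. induction bins as [|a bs IH]; intros b; simpl; [discriminate|].
  destruct (Rle_dec (a + x) 1) as [Hf|Hf].
  - destruct (bf_best x bs) as [r|] eqn:E.
    + destruct (IH r eq_refl) as [H1 [H2 H3]].
      destruct (Rle_dec r a) as [Hra|Hra]; intros Hs; injection Hs; intros; subst.
      * split; [left; auto|split; auto]. intros c [Ec|Hc] Hcf; [subst; lra|].
        specialize (H3 c Hc Hcf); lra.
      * split; [right; auto|split; auto]. intros c [Ec|Hc] Hcf; [subst; lra|]. auto.
    + intros Hs; injection Hs; intros; subst. split; [left; auto|split; auto].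
      intros c [Ec|Hc] Hcf; [subst; lra|]. pose proof (bb_none x bs E c Hc). lra.
  - intros Hs. destruct (IH b Hs) as [H1 [H2 H3]]. split; [right; auto|split; auto].
    intros c [Ec|Hc] Hcf; [subst; lra|]. auto.
Qed.

Lemma BB x bins b : In b bins -> b + x <= 1 -> (forall c, In c bins -> c + x <= 1 -> c <= b) ->
  bf_best x bins = Some b.
Proof.
  intros H1 H2 H3. destruct (bf_best x bins) as [b'|] eqn:E.
  - destruct (bb_some x bins b' E) as [G1 [G2 G3]].
    f_equal. apply Rle_antisym; auto.
  - pose proof (bb_none x bins E b H1). lra.
Qed.

Lemma BN x bins : (forall c, In c bins -> 1 < c + x) -> bf_best x bins = None.
Proof.
  intros H. destruct (bf_best x bins) as [b'|] eqn:E; auto.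
  destruct (bb_some x bins b' E) as [G1 [G2 G3]]. specialize (H b' G1). lra.
Qed.

Definition Good (c : R) := 3/4 < c \/ c = 3/4 \/ c = 1/4 \/ c = 1/3 \/ c = 1/2 \/ c = 7/12 \/ c = 2/3.
Definition ind (b : bool) : nat := if b then 1%nat else 0%nat.
Definition Rel (bins : list R) (p : nat) (f : bool) : Prop :=
  List.Forall Good bins /\ cnt (1/4) bins = ind (p =? 1)%nat /\ cnt (1/3) bins = ind (p =? 2)%nat /\
  cnt (1/2) bins = ind (p =? 3)%nat /\ cnt (7/12) bins = ind (p =? 4)%nat /\
  cnt (2/3) bins = ind (p =? 5)%nat /\ cnt (3/4) bins = ind f /\ (p <= 5)%nat.

Definition stepQ (p : nat) (f : bool) : nat * bool :=
  if f then (p, false) else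
  match p with 0%nat => (1%nat, false) | 1%nat => (3%nat, false) | 2%nat => (4%nat, false)
  | 3%nat => (0%nat, true) | _ => (0%nat, false) end.
Definition openQ (p : nat) (f : bool) : nat := if f then 0%nat else if (p =? 0)%nat then 1%nat else 0%nat.
Definition stepT (p : nat) (f : bool) : nat * bool :=
  match p with 0%nat => (2%nat, f) | 1%nat => (4%nat, f) | 2%nat => (5%nat, f) | _ => (0%nat, f) end.
Definition openT (p : nat) (f : bool) : nat := if (p =? 0)%nat then 1%nat else 0%nat.

Ltac decR H := repeat match type of H with
  | context [Req_EM_T ?a ?b] => destruct (Req_EM_T a b) as [?E|?E];
      [ try (exfalso; lra) | try (exfalso; apply E; lra) ]
  end.

Ltac good_cases Hc Hg :=
  unfold Good in Hg; destruct Hg as [Hg|[Hg|[Hg|[Hg|[Hg|[Hg|Hg]]]]]];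
  try lra; subst; try (apply cnt_In in Hc; lia).

Ltac solveB b :=
  match goal with
  | H : Rel ?bins _ _ |- _ =>
    destruct H as [HF [H1 [H2 [H3 [H4 [H5 [H6 Hp]]]]]]]; simpl in H1, H2, H3, H4, H5, H6;
    assert (Hin : In b bins) by (apply In_cnt; lia);
    unfold bf_step; rewrite (BB _ bins b Hin); [
      simpl; rewrite length_replace; split; [|lia];
      split; [apply Forall_replace; auto; unfold Good; lra|];
      repeat split; simpl; try lia;
      match goal with |- cnt ?v (replace_first ?bb ?yy _) = _ =>
        pose proof (cnt_replace bb yy v bins Hin) as Hv; decR Hv; lia end
    | lra
    | intros c Hc Hfit; pose proof (proj1 (List.Forall_forall Good bins) HF c Hc) as Hg;
      good_cases Hc Hg ]
  end.

Ltac solveN x :=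
  match goal with
  | H : Rel ?bins _ _ |- _ =>
    destruct H as [HF [H1 [H2 [H3 [H4 [H5 [H6 Hp]]]]]]]; simpl in H1, H2, H3, H4, H5, H6;
    unfold bf_step; rewrite (BN x bins); [
      simpl; rewrite length_app; simpl; split; [|lia];
      split; [apply List.Forall_app; split; auto; constructor; auto; unfold Good; lra|];
      repeat split; simpl; try lia;
      match goal with |- cnt ?v _ = _ =>
        pose proof (cnt_app v bins x) as Hv; decR Hv; lia end
    | intros c Hc; pose proof (proj1 (List.Forall_forall Good bins) HF c Hc) as Hg;
      good_cases Hc Hg ]
  end.

Lemma stepQ_ok bins p f : Rel bins p f ->
  Rel (bf_step bins (1/4)) (fst (stepQ p f)) (snd (stepQ p f)) /\
  length (bf_step bins (1/4)) = (length bins + openQ p f)%nat.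
Proof.
  intros H. assert (Hp5 : (p <= 5)%nat) by apply H.
  destruct f.
  - destruct p as [|[|[|[|[|[|p]]]]]]; try lia; simpl; solveB (3/4).
  - destruct p as [|[|[|[|[|[|p]]]]]]; try lia; simpl.
    + solveN (1/4).
    + solveB (1/4).
    + solveB (1/3).
    + solveB (1/2).
    + solveB (7/12).
    + solveB (2/3).
Qed.

Lemma stepT_ok bins p f : Rel bins p f ->
  Rel (bf_step bins (1/3)) (fst (stepT p f)) (snd (stepT p f)) /\
  length (bf_step bins (1/3)) = (length bins + openT p f)%nat.
Proof.
  intros H. assert (Hp5 : (p <= 5)%nat) by apply H.
  destruct p as [|[|[|[|[|[|p]]]]]]; try lia; destruct f; unfold openT; simpl.
  - solveN (1/3).
  - solveN (1/3).
  - solveB (1/4).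
  - solveB (1/4).
  - solveB (1/3).
  - solveB (1/3).
  - solveB (1/2).
  - solveB (1/2).
  - solveB (7/12).
  - solveB (7/12).
  - solveB (2/3).
  - solveB (2/3).
Qed.

Definition load (l : list R) (f : nat -> nat) (j : nat) : R :=
  Rlist_sum (map (fun i => if Nat.eq_dec (f i) j then nth i l 0 else 0) (seq 0 (length l))).

Lemma load_cons x l f j : load (x :: l) f j =
  (if Nat.eq_dec (f 0%nat) j then x else 0) + load l (fun i => f (S i)) j.
Proof.
  unfold load. simpl. f_equal. rewrite <- seq_shift, map_map. reflexivity.
Qed.

Lemma load_zero l : forall f j, (forall i, (i < length l)%nat -> f i <> j) -> load l f j = 0.
Proof.
  induction l as [|x l IH]; intros f j H.
  - reflexivity.
  - rewrite load_cons. destruct (Nat.eq_dec (f 0%nat) j) as [E|E].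
    + exfalso. apply (H 0%nat); simpl; auto; lia.
    + rewrite IH; [ring|]. intros i Hi. apply H. simpl; lia.
Qed.

Definition sq (rq : nat) : R := if (rq =? 0)%nat then 0 else 1 - INR rq / 4.
Definition st (rt : nat) : R := if (rt =? 0)%nat then 0 else 1 - INR rt / 3.

Definition PK (l : list R) : Prop := exists f K jq jt rq rt,
  (forall i, (i < length l)%nat -> (f i < K)%nat) /\
  (forall j, (j < K)%nat -> load l f j <= 1) /\
  (rq < 4)%nat /\ (rt < 3)%nat /\
  ((0 < rq)%nat -> (jq < K)%nat /\ load l f jq = INR rq / 4) /\
  ((0 < rt)%nat -> (jt < K)%nat /\ load l f jt = INR rt / 3) /\
  ((0 < rq)%nat -> (0 < rt)%nat -> jq <> jt) /\
  INR K <= W l + sq rq + st rt.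

Definition ext (j0 : nat) (f : nat -> nat) (i : nat) : nat :=
  match i with 0%nat => j0 | S i => f i end.

Lemma load_ext x l f j0 j : load (x :: l) (ext j0 f) j =
  (if Nat.eq_dec j0 j then x else 0) + load l f j.
Proof. rewrite load_cons. reflexivity. Qed.

Lemma W_cons x l : W (x :: l) = w x + W l.
Proof. reflexivity. Qed.

Lemma PK_all l : List.Forall Supp l -> PK l.
Proof.
  induction l as [|x l IH]; intros HS.
  - exists (fun _ => 0%nat), 0%nat, 0%nat, 0%nat, 0%nat, 0%nat.
    repeat split; simpl; try lia; try (intros; lia).
    unfold sq, st, W; simpl; lra.
  - inversion HS as [|? ? Hx Hl]; subst.
    destruct (IH Hl) as (f & K & jq & jt & rq & rt & Hf & Hload & Hrq & Hrt & Hq & Ht & Hqt & HK).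
    destruct Hx as [Hx|Hx]; subst x.
    + assert (Hw : w (1/4) = 1/4) by (unfold w; destruct (Req_EM_T (1/4) (1/4)); lra).
      destruct rq as [|[|[|[|rq]]]]; try lia.
      * exists (ext K f), (S K), K, jt, 1%nat, rt.
        assert (HK0 : load l f K = 0) by (apply load_zero; intros i Hi; specialize (Hf i Hi); lia).
        split; [|split; [|split; [|split; [|split; [|split; [|split]]]]]].
        -- intros [|i] Hi; simpl in *; [lia|]. specialize (Hf i ltac:(lia)); lia.
        -- intros j Hj. rewrite load_ext. destruct (Nat.eq_dec K j); [subst; lra|].
           rewrite Rplus_0_l; apply Hload; lia.
        -- lia.
        -- lia.
        -- intros _; split; [lia|]. rewrite load_ext. destruct (Nat.eq_dec K K); [|lia]. simpl. lra.
        -- intros HH; destruct (Ht HH) as [Ht1 Ht2]. split; [lia|]. rewrite load_ext.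
           destruct (Nat.eq_dec K jt); [lia|]. lra.
        -- intros _ HH; destruct (Ht HH); lia.
        -- rewrite S_INR, W_cons, Hw. unfold sq in *; simpl in *. lra.
      * exists (ext jq f), K, jq, jt, 2%nat, rt.
        destruct (Hq ltac:(lia)) as [Hq1 Hq2].
        split; [|split; [|split; [|split; [|split; [|split; [|split]]]]]].
        -- intros [|i] Hi; simpl in *; [lia|]. apply Hf; lia.
        -- intros j Hj. rewrite load_ext. destruct (Nat.eq_dec jq j); [subst; simpl in Hq2; lra|].
           rewrite Rplus_0_l; apply Hload; lia.
        -- lia.
        -- lia.
        -- intros _; split; [lia|]. rewrite load_ext. destruct (Nat.eq_dec jq jq); [|lia]. simpl in *. lra.
        -- intros HH; destruct (Ht HH) as [Ht1 Ht2]. split; [lia|]. rewrite load_ext.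
           destruct (Nat.eq_dec jq jt) as [E|E]; [specialize (Hqt ltac:(lia) HH); lia|]. lra.
        -- intros _ HH; apply Hqt; lia.
        -- rewrite W_cons, Hw. unfold sq in *; simpl in *. lra.
      * exists (ext jq f), K, jq, jt, 3%nat, rt.
        destruct (Hq ltac:(lia)) as [Hq1 Hq2].
        split; [|split; [|split; [|split; [|split; [|split; [|split]]]]]].
        -- intros [|i] Hi; simpl in *; [lia|]. apply Hf; lia.
        -- intros j Hj. rewrite load_ext. destruct (Nat.eq_dec jq j); [subst; simpl in Hq2; lra|].
           rewrite Rplus_0_l; apply Hload; lia.
        -- lia.
        -- lia.
        -- intros _; split; [lia|]. rewrite load_ext. destruct (Nat.eq_dec jq jq); [|lia]. simpl in *. lra.
        -- intros HH; destruct (Ht HH) as [Ht1 Ht2]. split; [lia|]. rewrite load_ext.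
           destruct (Nat.eq_dec jq jt) as [E|E]; [specialize (Hqt ltac:(lia) HH); lia|]. lra.
        -- intros _ HH; apply Hqt; lia.
        -- rewrite W_cons, Hw. unfold sq in *; simpl in *. lra.
      * exists (ext jq f), K, jq, jt, 0%nat, rt.
        destruct (Hq ltac:(lia)) as [Hq1 Hq2].
        split; [|split; [|split; [|split; [|split; [|split; [|split]]]]]].
        -- intros [|i] Hi; simpl in *; [lia|]. apply Hf; lia.
        -- intros j Hj. rewrite load_ext. destruct (Nat.eq_dec jq j); [subst; simpl in Hq2; lra|].
           rewrite Rplus_0_l; apply Hload; lia.
        -- lia.
        -- lia.
        -- lia.
        -- intros HH; destruct (Ht HH) as [Ht1 Ht2]. split; [lia|]. rewrite load_ext.
           destruct (Nat.eq_dec jq jt) as [E|E]; [specialize (Hqt ltac:(lia) HH); lia|]. lra.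
        -- lia.
        -- rewrite W_cons, Hw. unfold sq in *; simpl in *. lra.
    + assert (Hw : w (1/3) = 1/3) by (unfold w; destruct (Req_EM_T (1/3) (1/4)); lra).
      destruct rt as [|[|[|rt]]]; try lia.
      * exists (ext K f), (S K), jq, K, rq, 1%nat.
        assert (HK0 : load l f K = 0) by (apply load_zero; intros i Hi; specialize (Hf i Hi); lia).
        split; [|split; [|split; [|split; [|split; [|split; [|split]]]]]].
        -- intros [|i] Hi; simpl in *; [lia|]. specialize (Hf i ltac:(lia)); lia.
        -- intros j Hj. rewrite load_ext. destruct (Nat.eq_dec K j); [subst; lra|].
           rewrite Rplus_0_l; apply Hload; lia.
        -- lia.
        -- lia.
        -- intros HH; destruct (Hq HH) as [Hq1 Hq2]. split; [lia|]. rewrite load_ext.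
           destruct (Nat.eq_dec K jq); [lia|]. lra.
        -- intros _; split; [lia|]. rewrite load_ext. destruct (Nat.eq_dec K K); [|lia]. simpl. lra.
        -- intros HH _; destruct (Hq HH); lia.
        -- rewrite S_INR, W_cons, Hw. unfold st in *; simpl in *. lra.
      * exists (ext jt f), K, jq, jt, rq, 2%nat.
        destruct (Ht ltac:(lia)) as [Ht1 Ht2].
        split; [|split; [|split; [|split; [|split; [|split; [|split]]]]]].
        -- intros [|i] Hi; simpl in *; [lia|]. apply Hf; lia.
        -- intros j Hj. rewrite load_ext. destruct (Nat.eq_dec jt j); [subst; simpl in Ht2; lra|].
           rewrite Rplus_0_l; apply Hload; lia.
        -- lia.
        -- lia.
        -- intros HH; destruct (Hq HH) as [Hq1 Hq2]. split; [lia|]. rewrite load_ext.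
           destruct (Nat.eq_dec jt jq) as [E|E]; [specialize (Hqt HH ltac:(lia)); lia|]. lra.
        -- intros _; split; [lia|]. rewrite load_ext. destruct (Nat.eq_dec jt jt); [|lia]. simpl in *. lra.
        -- intros HH _; apply Hqt; lia.
        -- rewrite W_cons, Hw. unfold st in *; simpl in *. lra.
      * exists (ext jt f), K, jq, jt, rq, 0%nat.
        destruct (Ht ltac:(lia)) as [Ht1 Ht2].
        split; [|split; [|split; [|split; [|split; [|split; [|split]]]]]].
        -- intros [|i] Hi; simpl in *; [lia|]. apply Hf; lia.
        -- intros j Hj. rewrite load_ext. destruct (Nat.eq_dec jt j); [subst; simpl in Ht2; lra|].
           rewrite Rplus_0_l; apply Hload; lia.
        -- lia.
        -- lia.
        -- intros HH; destruct (Hq HH) as [Hq1 Hq2]. split; [lia|]. rewrite load_ext.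
           destruct (Nat.eq_dec jt jq) as [E|E]; [specialize (Hqt HH ltac:(lia)); lia|]. lra.
        -- lia.
        -- lia.
        -- rewrite W_cons, Hw. unfold st in *; simpl in *. lra.
Qed.

Lemma first_packable_le I K : packable I K -> forall fuel k0, (k0 <= K)%nat ->
  (first_packable I k0 fuel <= K)%nat.
Proof.
  intros HP fuel. induction fuel as [|fuel IH]; intros k0 Hk; simpl; auto.
  unfold decP. destruct (excluded_middle_informative (packable I k0)); auto.
  apply IH. destruct (Nat.eq_dec k0 K); [subst; contradiction|lia].
Qed.

Lemma first_packable_ge I fuel : forall k0, (k0 <= first_packable I k0 fuel)%nat.
Proof.
  induction fuel as [|fuel IH]; intros k0; simpl; auto.
  unfold decP. destruct (excluded_middle_informative (packable I k0)); auto.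
  specialize (IH (S k0)). lia.
Qed.

Lemma OPT_ge1 l : l <> nil -> (1 <= OPT l)%nat.
Proof.
  intros Hl. unfold OPT. destruct l as [|x l]; [congruence|]. simpl.
  unfold decP. destruct (excluded_middle_informative (packable (x :: l) 0)) as [HP|HP].
  - exfalso. destruct HP as [f [Hf _]]. specialize (Hf 0%nat ltac:(simpl; lia)). lia.
  - apply first_packable_ge.
Qed.

Lemma OPT_le l : List.Forall Supp l -> INR (OPT l) <= W l + 2.
Proof.
  intros HS. destruct (PK_all l HS) as (f & K & jq & jt & rq & rt & Hf & Hload & Hrq & Hrt & Hq & Ht & Hqt & HK).
  assert (HP : packable l K) by (exists f; split; auto).
  pose proof (first_packable_le l K HP (length l) 0%nat ltac:(lia)) as H.
  apply le_INR in H. unfold OPT.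
  assert (sq rq <= 1) by (unfold sq; destruct (rq =? 0)%nat; [lra|];
    destruct rq as [|[|[|[|]]]]; simpl; try lra; lia).
  assert (st rt <= 1) by (unfold st; destruct (rt =? 0)%nat; [lra|];
    destruct rt as [|[|[|]]]; simpl; try lra; lia).
  lra.
Qed.

Definition cc : R := 1775/5676.

Definition Phi (p : nat) (f : bool) : R :=
  match p, f with
  | 0%nat, false => 0 | 0%nat, true => -1625/5676
  | 1%nat, false => -4135/5676 | 1%nat, true => -471/473
  | 2%nat, false => -1775/2838 | 2%nat, true => -1767/1892
  | 3%nat, false => -125/258 | 3%nat, true => -4075/5676
  | _, false => -1775/5676 | _, true => -1745/2838
  end.

Lemma Phi_le0 p f : Phi p f <= 0.
Proof. destruct p as [|[|[|[|p]]]]; destruct f; simpl; lra. Qed.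

Lemma drift p f : (p <= 5)%nat ->
  3/5 * (INR (openQ p f) + Phi (fst (stepQ p f)) (snd (stepQ p f))) +
  2/5 * (INR (openT p f) + Phi (fst (stepT p f)) (snd (stepT p f))) >= Phi p f + cc.
Proof.
  intros Hp. unfold cc.
  destruct p as [|[|[|[|[|[|p]]]]]]; try lia; destruct f; unfold openQ, openT; simpl; lra.
Qed.

Lemma BF_bound n : forall bins p f, Rel bins p f ->
  E2 n (fun l => INR (length (fold_left bf_step l bins))) >= INR (length bins) + Phi p f + cc * INR n.
Proof.
  induction n as [|m IH]; intros bins p f HR.
  - simpl. pose proof (Phi_le0 p f). lra.
  - rewrite S_INR. simpl.
    destruct (stepQ_ok bins p f HR) as [HQ LQ].
    destruct (stepT_ok bins p f HR) as [HT LT].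
    pose proof (IH _ _ _ HQ) as IQ. pose proof (IH _ _ _ HT) as IT.
    rewrite LQ, plus_INR in IQ. rewrite LT, plus_INR in IT.
    assert (Hp : (p <= 5)%nat) by apply HR.
    pose proof (drift p f Hp).
    lra.
Qed.

Lemma E2_const n : forall a, E2 n (fun _ => a) = a.
Proof. induction n as [|m IH]; intros a; simpl; [auto|]. rewrite !IH. lra. Qed.

Lemma Rel_nil : Rel nil 0%nat false.
Proof. repeat split; simpl; try lia. constructor. Qed.

Theorem lemma15 :
  exists (s p : nat -> R),
    (forall i, 0 <= p i) /\
    is_series p 1 /\
    (forall i, 0 < s i <= 1) /\
    (forall i, 0 < p i -> / 4 <= s i) /\
    Rbar_lt (Finite (11 / 10))
      (LimInf_seq (fun n =>
         Eiid s p n (fun l => INR (BF l)) / Eiid s p n (fun l => INR (OPT l)))).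
Proof.
  exists sv, pv. split; [|split; [|split; [|split]]].
  - intros [|[|i]]; simpl; lra.
  - replace 1 with (pv 0%nat + pv 1%nat) by (simpl; lra).
    apply series_two. intros [|[|i]] Hi; [lia|lia|reflexivity].
  - intros [|[|i]]; simpl; lra.
  - intros [|[|i]]; simpl; lra.
  - set (t := 1101/1000).
    assert (Hev : eventually (fun n => t <=
       Eiid sv pv n (fun l => INR (BF l)) / Eiid sv pv n (fun l => INR (OPT l)))).
    { exists 4000%nat. intros n Hn. rewrite !Eiid_E2.
      assert (HN : 4000 <= INR n).
      { apply le_INR in Hn. rewrite INR_IZR_INZ in Hn. simpl in Hn. exact Hn. }
      pose proof (BF_bound n nil 0%nat false Rel_nil) as HA. simpl in HA.
      assert (HB1 : E2 n (fun l => INR (OPT l)) <= E2 n (fun l => 2 + W l)).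
      { apply E2_mono. intros l _ HS. pose proof (OPT_le l HS). lra. }
      rewrite E2_W in HB1.
      assert (HB0 : E2 n (fun _ => 1) <= E2 n (fun l => INR (OPT l))).
      { apply E2_mono. intros l Hl _. apply (le_INR 1).
        apply OPT_ge1. intros E; rewrite E in Hl; simpl in Hl; lia. }
      rewrite E2_const in HB0.
      unfold BF. set (A := E2 n (fun l => INR (length (fold_left bf_step l nil)))) in *.
      set (B := E2 n (fun l => INR (OPT l))) in *.
      apply Rmult_le_reg_r with B; [lra|]. unfold Rdiv.
      rewrite Rmult_assoc, Rinv_l, Rmult_1_r by lra.
      unfold t, cc in *. lra. }
    pose proof (LimInf_le (fun _ => t) _ Hev) as HL.
    rewrite LimInf_seq_const in HL.
    destruct (LimInf_seq _); simpl in *; auto; unfold t in *; lra.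
Qed.
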